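(* For every $a\in\mathbb N^{\mathbb N}$ and $n\in\mathbb N$, $q_n(a)\le\#\Omega_{a,n}\le10\,q_n(a)$.
   Context: For $a=(a_n)\in\mathbb N^{\mathbb N}$, $q_n(a)$ are the continued fraction denominators: $q_{-1}=0$, $q_0=1$, $q_{n+1}=a_{n+1}q_n+q_{n-1}$. For $n\ge1$ let $\mathcal A_n=\{(\mathbf1,k)_n:1\le k\le n+1\}\cup\{(\mathbf2,1)_n\}\cup\{(\mathbf3,k)_n:1\le k\le n\}$, type $\mathbf t_{(\mathbf t,k)_n}=\mathbf t$. For $\mathbf t\in\{\mathbf1,\mathbf2,\mathbf3\}$, $\hat e\in\mathcal A_n$: $\mathbf t\to\hat e$ iff $(\mathbf t,\hat e)$ is $(\mathbf1,(\mathbf2,1)_n)$, $(\mathbf2,(\mathbf1,k)_n)$ with $k\le n+1$, $(\mathbf2,(\mathbf3,k)_n)$ with $k\le n$, $(\mathbf3,(\mathbf1,k)_n)$ with $k\le n$, or $(\mathbf3,(\mathbf3,k)_n)$ with $k\le n-1$; $e\to\hat e$ iff $\mathbf t_e\to\hat e$. $\Omega_{a,n}$ is the set of words $w_1\cdots w_n$ with $w_j\in\mathcal A_{a_j}$ and $w_j\to w_{j+1}$ for $1\le j<n$. *)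

(* Defs.v *)
From HB Require Import structures.
From mathcomp Require Import all_boot.
Set Implicit Arguments. Unset Strict Implicit. Unset Printing Implicit Defensive.

(* The sequence a = (a_1, a_2, ...) is represented by a : nat -> nat,
   with a_j = a j for j >= 1 (the value a 0 is irrelevant). *)

(* (q_{n-1}, q_n), with q_{-1} = 0, q_0 = 1, q_{n+1} = a_{n+1} q_n + q_{n-1}. *)
Fixpoint qpair (a : nat -> nat) (n : nat) : nat * nat :=
  match n with
  | 0 => (0, 1)
  | m.+1 => let: (qm1, qm) := qpair a m in (qm, a m.+1 * qm + qm1)
  end.

Definition q (a : nat -> nat) (n : nat) : nat := (qpair a n).2.

Inductive typ := T1 | T2 | T3.

Definition typ_eqb (x y : typ) : bool :=
  match x, y with
  | T1, T1 | T2, T2 | T3, T3 => true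
  | _, _ => false
  end.

Lemma typ_eqP : Equality.axiom typ_eqb.
Proof. by case; case; constructor. Qed.

HB.instance Definition _ := hasDecEq.Build typ typ_eqP.

(* A letter (t, k)_m is represented by the pair (t, k); its alphabet index m
   is recorded by membership in A_m. *)
Definition letter := (typ * nat)%type.

Definition inA (m : nat) (e : letter) : bool :=
  match e with
  | (T1, k) => (1 <= k) && (k <= m.+1)
  | (T2, k) => k == 1
  | (T3, k) => (1 <= k) && (k <= m)
  end.

Definition arrowT (t : typ) (m : nat) (e : letter) : bool :=
  match t, e with
  | T1, (T2, k) => k == 1
  | T2, (T1, k) => k <= m.+1
  | T2, (T3, k) => k <= m
  | T3, (T1, k) => k <= m
  | T3, (T3, k) => k <= m.-1
  | _, _ => false
  end.

Definition arrow (e : letter) (m : nat) (e' : letter) : bool := arrowT e.1 m e'.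

(* w = w_1 ... w_n is represented by the list [:: w_1; ...; w_n],
   i.e. w_j = nth w0 w (j-1). *)
Definition Omega (a : nat -> nat) (n : nat) (w : seq letter) : Prop :=
  size w = n /\
  (forall j, 1 <= j <= n -> inA (a j) (nth (T2, 1) w j.-1)) /\
  (forall j, 1 <= j < n ->
     arrow (nth (T2, 1) w j.-1) (a j.+1) (nth (T2, 1) w j)).

(* Main.v *)
Require Import Defs.
From mathcomp Require Import all_boot zify.
Set Implicit Arguments. Unset Strict Implicit.

Definition Lall (m : nat) : seq letter :=
  [seq (T1, k) | k <- iota 1 m.+1] ++ (T2, 1) :: [seq (T3, k) | k <- iota 1 m].

Lemma mem_pairmap (t t' : typ) (k : nat) (s : seq nat) : ((t,k) \in map (pair t') s) = (t == t') && (k \in s).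
Proof.
apply/mapP/andP => [[k' ks [-> ->]] | [/eqP -> ks]]; first by rewrite eqxx.
by exists k.
Qed.

Lemma mem_Lall m e : (e \in Lall m) = inA m e.
Proof.
case: e => [[] k]; rewrite /Lall mem_cat !in_cons !mem_pairmap ?mem_iota /= ?xpair_eqE /= ?mem_iota; lia.
Qed.

Lemma uniq_L3 (s1 s2 : seq nat) : uniq s1 -> uniq s2 ->
  uniq ([seq (T1, k) | k <- s1] ++ (T2, 1) :: [seq (T3, k) | k <- s2]).
Proof.
move=> u1 u2.
rewrite cat_uniq cons_uniq !map_inj_uniq //; try by move=> x y [].
rewrite mem_pairmap u1 u2 andbT; apply/and3P; split => //.
apply/hasPn => e; rewrite in_cons.
by case/orP => [/eqP -> | /mapP [k _ ->]]; rewrite mem_pairmap.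
Qed.

Lemma uniq_Lall m : uniq (Lall m).
Proof. by apply: uniq_L3; apply: iota_uniq. Qed.

Lemma cnt_iota j r s : count (fun k => k <= j) (iota s r) = minn r (j.+1 - s).
Proof. elim: r s => [|r IH] s /=; first by rewrite min0n. rewrite IH; lia. Qed.

Definition K (t' t : typ) (m : nat) : nat :=
  match t', t with
  | T1, T2 => 1
  | T2, T1 => m.+1
  | T2, T3 => m
  | T3, T1 => m
  | T3, T3 => m.-1
  | _, _ => 0
  end.

Lemma cnt_false (s : seq nat) : count (fun _ => false) s = 0.
Proof. by elim: s. Qed.

Lemma cnt_preim (t0 : typ) (P : pred letter) (s : seq nat) :
  count (preim (pair t0) P) s = count (fun k => P (t0, k)) s.
Proof. by []. Qed.

Local Arguments iota : simpl never.

Lemma count_K t' t m :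
  count (fun e : letter => e.1 == t) (filter (arrowT t' m) (Lall m)) = K t' t m.
Proof.
rewrite count_filter /Lall count_cat !count_map !cnt_preim.
case: t'; case: t => /=; rewrite ?count_map ?cnt_preim /= ?cnt_false ?cnt_iota; try lia.
Qed.

Lemma cnt_true (p : pred nat) (s : seq nat) : (forall x, p x) -> count p s = size s.
Proof. by move=> h; elim: s => //= x s ->; rewrite h. Qed.

Lemma count_L0 t m :
  count (fun e : letter => e.1 == t) (Lall m) =
  match t with T1 => m.+1 | T2 => 1 | T3 => m end.
Proof.
rewrite /Lall count_cat !count_map !cnt_preim.
case: t => /=; rewrite ?count_map ?cnt_preim /= ?cnt_false ?cnt_iota; try lia.
- rewrite cnt_true ?size_iota //; lia.
- rewrite cnt_true ?size_iota //; lia.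
Qed.

Definition ext (a : nat -> nat) n (w : seq letter) : seq letter :=
  if n is 0 then Lall (a 1)
  else filter (arrow (last (T2, 1) w) (a n.+1)) (Lall (a n.+1)).

Fixpoint Wl (a : nat -> nat) n : seq (seq letter) :=
  match n with
  | 0 => [:: [::]]
  | n.+1 => [seq rcons w e | w <- Wl a n, e <- ext a n w]
  end.

Lemma uniq_rc (s : seq (seq letter)) (t : seq letter -> seq letter) :
  uniq s -> (forall w, uniq (t w)) -> uniq [seq rcons w e | w <- s, e <- t w].
Proof.
move=> us ut; elim: s us => //= w s IH /andP [ws us].
rewrite cat_uniq map_inj_uniq ?ut; last exact: rcons_injr.
rewrite IH // andbT /=.
apply/hasPn => z /allpairsPdep [w' [e' [w's _ ->]]].
apply/negP => /mapP [e _ /rcons_inj [eq _]].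
by move: ws; rewrite -eq w's.
Qed.

Lemma uniq_Wl a n : uniq (Wl a n).
Proof.
elim: n => //= n IH; apply: uniq_rc => // w.
case: n {IH} => [|n]; rewrite /ext; first exact: uniq_Lall.
by apply: filter_uniq; apply: uniq_Lall.
Qed.

Lemma Omega0 a w : Omega a 0 w <-> w = [::].
Proof.
split; first by case => /size0nil.
by move=> ->; split => //; split => j; lia.
Qed.

Lemma OmegaS a n w : Omega a n.+1 w <-> exists w' e,
  [/\ w = rcons w' e, Omega a n w', inA (a n.+1) e &
      (0 < n -> arrow (last (T2, 1) w') (a n.+1) e)].
Proof.
split.
- case=> sz [hA hR]; case/lastP: w sz hA hR => [//|w' e].
  rewrite size_rcons => -[sz'] hA hR; exists w', e; split => //.
  + split => //; split.
    * move=> j hj; have := hA j ltac:(lia).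
      by rewrite nth_rcons sz' ifT //; lia.
    * move=> j hj; have := hR j ltac:(lia).
      by rewrite !nth_rcons sz' !ifT //; lia.
  + have := hA n.+1 ltac:(lia).
    by rewrite nth_rcons sz' /= ltnn eqxx.
  + move=> n0; have := hR n ltac:(lia).
    rewrite !nth_rcons sz' ltnn eqxx ifT; last lia.
    by rewrite -sz' nth_last.
- case=> w' [e [-> [sz' [hA hR]] he har]].
  split; first by rewrite size_rcons sz'.
  split.
  + move=> j hj; rewrite nth_rcons sz'.
    case: ifP => h1; first by apply: hA; lia.
    have ej : j = n.+1 by lia.
    by subst j; rewrite /= eqxx.
  + move=> j hj; rewrite !nth_rcons sz'.
    case: (ltnP j n) => h1.
    * rewrite ifT; last lia.
      by apply: hR; lia.
    * have ej : j = n by lia.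
      subst j; rewrite eqxx ifT; last lia.
      by rewrite -sz' nth_last sz'; apply: har; lia.
Qed.

Lemma mem_ext a n w e :
  (e \in ext a n w) = inA (a n.+1) e && ((n == 0) || arrow (last (T2, 1) w) (a n.+1) e).
Proof.
case: n => [|n]; rewrite /ext; first by rewrite mem_Lall andbT.
by rewrite mem_filter mem_Lall andbC.
Qed.

Lemma mem_Wl a n w : w \in Wl a n <-> Omega a n w.
Proof.
elim: n w => [|n IH] w.
  by rewrite Omega0 inE; split => /eqP.
rewrite OmegaS /=; split.
- case/allpairsPdep => w' [e [hw' he ->]].
  move: he; rewrite mem_ext => /andP [h1 h2].
  exists w', e; split => //; first exact/IH.
  by move=> n0; move: h2; case: (n) n0.
- case=> w' [e [-> hw' h1 h2]].
  apply/allpairsPdep; exists w', e; split => //; first exact/IH.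
  rewrite mem_ext h1 /=; case: (n) h2 => //= n' h2.
  by apply: h2.
Qed.

Definition ty t (w : seq letter) := (last (T2, 1) w).1 == t.

Lemma count_step a n t :
  count (ty t) (Wl a n.+1) =
  sumn [seq count (fun e : letter => e.1 == t) (ext a n w) | w <- Wl a n].
Proof.
rewrite /= count_flatten -map_comp; apply: congr1; apply: eq_map => w /=.
by rewrite count_map; apply: eq_count => e; rewrite /= /ty last_rcons.
Qed.

Lemma group (g : typ -> nat) (s : seq (seq letter)) :
  sumn [seq g (last (T2, 1) w).1 | w <- s] =
  g T1 * count (ty T1) s + g T2 * count (ty T2) s + g T3 * count (ty T3) s.
Proof.
elim: s => [/=|w s /= ->]; first lia; rewrite /ty; case: (last (T2, 1) w).1 => /=; lia.
Qed.

Lemma size_split (s : seq (seq letter)) :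
  size s = count (ty T1) s + count (ty T2) s + count (ty T3) s.
Proof.
elim: s => [/=|w s /= ->]; first lia; rewrite /ty; case: (last (T2, 1) w).1 => /=; lia.
Qed.

Lemma count_rec a n t :
  count (ty t) (Wl a n.+2) =
  K T1 t (a n.+2) * count (ty T1) (Wl a n.+1) +
  K T2 t (a n.+2) * count (ty T2) (Wl a n.+1) +
  K T3 t (a n.+2) * count (ty T3) (Wl a n.+1).
Proof.
rewrite count_step -(group (fun t' => K t' t (a n.+2))); apply: congr1.
by apply: eq_map => w; rewrite /ext count_K.
Qed.

Lemma count_base a t :
  count (ty t) (Wl a 1) = match t with T1 => (a 1).+1 | T2 => 1 | T3 => a 1 end.
Proof. rewrite count_step. rewrite (_ : Wl a 0 = [:: [::]]) // /map /sumn /ext count_L0 /= addn0 //. Qed.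
Lemma inv a (apos : forall j, 1 <= j -> 0 < a j) n :
  exists r rp,
  [/\ count (ty T2) (Wl a n.+1) + count (ty T3) (Wl a n.+1) = (qpair a n.+1).2 + r,
      count (ty T1) (Wl a n.+1) = count (ty T3) (Wl a n.+1) + (qpair a n.+1).1 + rp,
      r <= (qpair a n.+1).2, rp <= (qpair a n.+1).1 &
      (qpair a n.+1).1 <= (qpair a n.+1).2].
Proof.
elim: n => [|n [r [rp [H1 H2 H3 H4 H5]]]].
  rewrite !count_base /=; have := apos 1 erefl.
  exists 1, 0; split; lia.
have -> : qpair a n.+2 = ((qpair a n.+1).2, a n.+2 * (qpair a n.+1).2 + (qpair a n.+1).1).
  by change (qpair a n.+2) with (let: (qm1, qm) := qpair a n.+1 in (qm, a n.+2 * qm + qm1));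
     case: (qpair a n.+1).
rewrite !count_rec.
move: (qpair a n.+1) H1 H2 H3 H4 H5 => [qp qn] /= H1 H2 H3 H4 H5.
move: H1 H2.
set c1 := count (ty T1) _; set c2 := count (ty T2) _; set c3 := count (ty T3) _.
move=> H1 H2.
have := apos n.+2 erefl.
case: (a n.+2) => [//|m] _ /=.
exists (m.+1 * r + rp), r; split; nia.
Qed.

Theorem lemma4p3 (a : nat -> nat) (apos : forall j, 1 <= j -> 0 < a j) (n : nat) :
  exists s : seq (seq letter),
    [/\ uniq s, (forall w, w \in s <-> Omega a n w) &
        q a n <= size s <= 10 * q a n].
Proof.
exists (Wl a n); split; [exact: uniq_Wl | exact: mem_Wl |].
case: n => [|n]; first by [].
have [r [rp [H1 H2 H3 H4 H5]]] := inv apos n.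
rewrite size_split /q; lia.
Qed.
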